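(* Let $n\ge2$. There exist polynomials $p_1,\dots,p_{n-1}\in\mathbb{C}[x,y]$ in the variables $(x,y)\in\mathbb{C}^n\times\mathbb{C}^{n-1}$ such that, if $B(x,y)$ denotes the $n\times n$ matrix whose first row is $(x_1,p_1(x,y),\dots,p_{n-1}(x,y))$, whose first column is $(x_1,1,0,\dots,0)^T$, and whose lower-right $(n-1)\times(n-1)$ block is the matrix with $1$'s on the subdiagonal, last column $\big((-1)^ny_{n-1},(-1)^{n-1}y_{n-2},\dots,(-1)^3y_2,y_1\big)^T$ (i.e. entry $(-1)^{n-i+1}y_{n-i}$ in its $i$-th row) and all other entries $0$, then for every $(x,y)$ and every $j=2,\dots,n$, \[ \sum_{I\in\mathscr{I}^j:\,i_1=1}\det\big(B(x,y)_I\big)=x_j. \] Moreover, for fixed $(x,y)$, the numbers $p_1(x,y),\dots,p_{n-1}(x,y)$ are the unique complex numbers placed in positions $(1,2),\dots,(1,n)$ of such a matrix (with the other entries as described) for which these $n-1$ equations hold.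
   Context: $\mathscr{I}^j$ denotes the set of increasing $j$-tuples $I=(i_1<\dots<i_j)$ in $\{1,\dots,n\}$; for a matrix $A$, $A_I$ is the principal submatrix with rows and columns indexed by $I$. *)

(* Defs.v *)
From HB Require Import structures.
From mathcomp Require Import all_boot all_order all_algebra.
Set Implicit Arguments. Unset Strict Implicit. Unset Printing Implicit Defensive.
Import Order.TTheory GRing.Theory Num.Theory.
Local Open Scope ring_scope.

Inductive is_polyfun (R : ringType) (I : Type) : ((I -> R) -> R) -> Prop :=
| pf_const (c : R) : is_polyfun (fun _ => c)
| pf_var (i : I) : is_polyfun (fun v => v i)
| pf_add f g : is_polyfun f -> is_polyfun g -> is_polyfun (fun v => f v + g v)
| pf_mul f g : is_polyfun f -> is_polyfun g -> is_polyfun (fun v => f v * g v).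

Definition extn (R : ringType) (k : nat) (f : 'I_k -> R) (m : nat) : R :=
  oapp f 0 (insub m).

(* The matrix B (0-based indices i, j; the paper's are i+1, j+1).
   x : C^n, y : C^(n-1), p : the entries (1,2),...,(1,n). *)
Definition Bmat (R : ringType) (n : nat) (x : 'I_n -> R) (y p : 'I_n.-1 -> R)
  : 'M[R]_n :=
  \matrix_(i, j)
    if (val i == 0%N) && (val j == 0%N) then x i
    else if val i == 0%N then extn p (val j).-1
    else if val j == 0%N then (if val i == 1%N then 1 else 0)
    else if val j == n.-1 then (-1) ^+ (n - val i + 1) * extn y (n - val i - 1)
    else if val i == (val j).+1 then 1 else 0.

Definition pminor (R : comRingType) (n : nat) (A : 'M[R]_n) (I : {set 'I_n}) : R :=
  \det (mxsub (@enum_val _ (mem I)) (@enum_val _ (mem I)) A).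

(* the increasing tuple I has i_1 = 1 (0-based: contains index 0) *)
Definition first_in (n : nat) (I : {set 'I_n}) : bool :=
  [exists i in I, val i == 0%N].

(* the n-1 equations: for j = 2..n (0-based j = 1..n-1),
   sum over I in I^j with i_1 = 1 of det B_I = x_j *)
Definition minor_eqs (R : comRingType) (n : nat) (x : 'I_n -> R)
  (y p : 'I_n.-1 -> R) : Prop :=
  forall j : 'I_n, (0 < val j)%N ->
    \sum_(I : {set 'I_n} | (#|I| == (val j).+1)%N && first_in I)
       pminor (Bmat x y p) I = x j.

Definition join_xy (R : Type) (n : nat) (x : 'I_n -> R) (y : 'I_n.-1 -> R)
  (s : 'I_n + 'I_n.-1) : R :=
  match s with inl i => x i | inr k => y k end.

(* Main.v *)
Require Import Defs.
From HB Require Import structures.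
From mathcomp Require Import all_boot all_order all_algebra.
From Stdlib Require Import FunctionalExtensionality.
Set Implicit Arguments. Unset Strict Implicit. Unset Printing Implicit Defensive.
Import Order.TTheory GRing.Theory Num.Theory.
Local Open Scope ring_scope.


Lemma pf_ext (R : ringType) (I : Type) (f g : (I -> R) -> R) :
  (forall v, f v = g v) -> is_polyfun f -> is_polyfun g.
Proof. by move=> e; have -> : f = g by apply: functional_extensionality. Qed.

Lemma pf_sum (R : ringType) (I T : Type) (r : seq T) (P : pred T)
  (F : T -> (I -> R) -> R) : (forall i, is_polyfun (F i)) ->
  is_polyfun (fun v => \sum_(i <- r | P i) F i v).
Proof.
move=> H; elim: r => [|a r IH].
  by apply: (pf_ext (f := fun _ => 0)); [move=> v; rewrite big_nil | apply: pf_const].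
case Pa: (P a).
  apply: (pf_ext (f := fun v => F a v + \sum_(i <- r | P i) F i v)).
    by move=> v; rewrite big_cons Pa.
  exact: pf_add.
by apply: (pf_ext _ IH) => v; rewrite big_cons Pa.
Qed.

Lemma pf_prod (R : ringType) (I T : Type) (r : seq T) (P : pred T)
  (F : T -> (I -> R) -> R) : (forall i, is_polyfun (F i)) ->
  is_polyfun (fun v => \prod_(i <- r | P i) F i v).
Proof.
move=> H; elim: r => [|a r IH].
  by apply: (pf_ext (f := fun _ => 1)); [move=> v; rewrite big_nil | apply: pf_const].
case Pa: (P a).
  apply: (pf_ext (f := fun v => F a v * \prod_(i <- r | P i) F i v)).
    by move=> v; rewrite big_cons Pa.
  exact: pf_mul.
by apply: (pf_ext _ IH) => v; rewrite big_cons Pa.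
Qed.

Lemma pf_det (R : comRingType) (I : Type) m (A : (I -> R) -> 'M[R]_m) :
  (forall a b, is_polyfun (fun v => A v a b)) -> is_polyfun (fun v => \det (A v)).
Proof.
move=> H; rewrite /determinant; apply: pf_sum => s.
apply: pf_mul; first exact: pf_const.
by apply: pf_prod.
Qed.

Definition Fj (R : comRingType) n (x : 'I_n -> R) (y p : 'I_n.-1 -> R) (j : 'I_n) : R :=
  \sum_(I : {set 'I_n} | (#|I| == (val j).+1)%N && first_in I) pminor (Bmat x y p) I.

Lemma pf_extn (R : ringType) (I : Type) k (P : 'I_k -> (I -> R) -> R) m :
  (forall i, is_polyfun (P i)) -> is_polyfun (fun v => extn (fun i => P i v) m).
Proof.
move=> H; rewrite /extn; case: insubP => [i _ _|_] /=; first exact: H.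
exact: pf_const.
Qed.

Lemma pf_Fj (R : comRingType) (I : Type) n (X : 'I_n -> (I -> R) -> R)
  (Y P : 'I_n.-1 -> (I -> R) -> R) j :
  (forall i, is_polyfun (X i)) -> (forall k, is_polyfun (Y k)) ->
  (forall k, is_polyfun (P k)) ->
  is_polyfun (fun v => Fj (fun i => X i v) (fun k => Y k v) (fun k => P k v) j).
Proof.
move=> hX hY hP; rewrite /Fj; apply: pf_sum => S; rewrite /pminor.
apply: pf_det => a b; rewrite /Bmat.
set i := enum_val a; set k := enum_val b.
apply: (pf_ext (f := fun v => if (val i == 0%N) && (val k == 0%N) then X i v
    else if val i == 0%N then extn (fun i => P i v) (val k).-1
    else if val k == 0%N then (if val i == 1%N then 1 else 0)
    else if val k == n.-1 then (-1) ^+ (n - val i + 1) * extn (fun i => Y i v) (n - val i - 1)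
    else if val i == (val k).+1 then 1 else 0)).
  by move=> v; rewrite !mxE.
case: (_ && _); first exact: hX.
case: (val i == 0%N); first exact: pf_extn.
case: (val k == 0%N); first by case: (val i == 1%N); apply: pf_const.
case: (val k == n.-1); last by case: (_ == _); apply: pf_const.
by apply: pf_mul; [apply: pf_const | apply: pf_extn].
Qed.


Lemma B1 (R : ringType) n (x : 'I_n -> R) (y p p' : 'I_n.-1 -> R) i k :
  val i != 0%N -> Bmat x y p i k = Bmat x y p' i k.
Proof. by move=> /negbTE h; rewrite !mxE h. Qed.

Lemma B2 (R : ringType) n (x : 'I_n -> R) (y p : 'I_n.-1 -> R) i k :
  val i = 0%N -> Bmat x y p i k = if val k == 0%N then x i else extn p (val k).-1.
Proof. by move=> h; rewrite !mxE h eqxx /=. Qed.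

Lemma B3 (R : ringType) n (x : 'I_n -> R) (y p : 'I_n.-1 -> R) i (q : 'I_n) :
  val i != 0%N -> (val q < n.-1)%N -> Bmat x y p i q = (val i == (val q).+1)%:R.
Proof.
move=> /negbTE h hq; rewrite !mxE h /=.
case: eqP => [->|_]; first by case: (_ == _).
rewrite (_ : (val q == n.-1) = false); last by apply/negbTE; rewrite neq_ltn hq.
by case: (_ == _).
Qed.

Lemma val_enum_I0 n (j : nat) : (j < n)%N ->
  map val (enum [set i : 'I_n | (val i <= j)%N]) = iota 0 j.+1.
Proof.
move=> hj; rewrite /enum_mem -enumT.
rewrite (eq_filter (a2 := preim val (fun k => (k <= j)%N))); last by move=> i; rewrite !inE.
rewrite -filter_map val_enum_ord.
rewrite -(subnKC hj) iotaD filter_cat add0n.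
rewrite (eq_in_filter (a2 := predT)); last by move=> k; rewrite mem_iota /= add0n.
rewrite filter_predT (eq_in_filter (a2 := pred0)); last first.
  by move=> k; rewrite mem_iota /= => /andP[h _]; rewrite leqNgt h.
by rewrite filter_pred0 cats0.
Qed.

Lemma card_I0 n (j : nat) : (j < n)%N -> #|[set i : 'I_n | (val i <= j)%N]| = j.+1.
Proof. by move=> hj; rewrite cardE -(size_map val) val_enum_I0 // size_iota. Qed.

Lemma enum_val_I0 n (j : nat) (hj : (j < n)%N) (a : 'I_#|[set i : 'I_n | (val i <= j)%N]|) :
  val (enum_val a) = val a.
Proof.
rewrite (enum_val_nth (enum_val a)) -(nth_map _ (val (enum_val a))); last first.
  by rewrite -cardE.
by rewrite val_enum_I0 // nth_iota // -(card_I0 hj).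
Qed.

Lemma extn_agree (R : ringType) k (p p' : 'I_k -> R) m j :
  (forall i : 'I_k, (val i < j)%N -> p i = p' i) -> (m < j)%N -> extn p m = extn p' m.
Proof. by move=> h hm; rewrite /extn; case: insubP => //= i _ e; apply: h; move: e hm => /= ->. Qed.

Lemma chain n (I : {set 'I_n}) (c : nat) :
  (forall q : 'I_n, q \in I -> (val q < c)%N -> forall q' : 'I_n, val q' = (val q).+1 -> q' \in I) ->
  (exists2 z : 'I_n, val z = 0%N & z \in I) -> forall i : 'I_n, (val i <= c)%N -> i \in I.
Proof.
move=> H [z z0 zI] i hi.
suff: forall k, (k <= c)%N -> forall i : 'I_n, val i = k -> i \in I by move=> /(_ _ hi i erefl).
elim=> [|k IH] hk i' e; first by rewrite (_ : i' = z) //; apply: val_inj; rewrite e z0.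
have kn : (k < n)%N by move: (ltn_ord i'); rewrite e; apply: ltnW.
apply: (H (Ordinal kn)).
- by apply: IH => //; apply: ltnW.
- by [].
- exact: e.
Qed.


Lemma cof_zero (R : comRingType) m (A : 'M[R]_m) r0 s bq : bq != s ->
  (forall a, a != r0 -> A a bq = 0) -> cofactor A r0 s = 0.
Proof.
move=> hbq H.
set E := \matrix_(a, b) if a == r0 then (b == s)%:R else A a b.
have h1 : cofactor A r0 s = cofactor E r0 s.
  rewrite /cofactor; congr (_ * \det _); apply/matrixP => a b; rewrite !mxE.
  by rewrite eq_sym (negbTE (neq_lift _ _)).
have h2 : \det E = cofactor E r0 s.
  rewrite (expand_det_row E r0) (bigD1 s) //= big1 ?addr0.
    by rewrite mxE !eqxx mul1r.
  by move=> b /negbTE hb; rewrite mxE eqxx hb mul0r.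
have h3 : \det E = 0.
  rewrite (expand_det_col E bq) big1 // => a _; rewrite mxE.
  case: eqP => [_|/eqP ha]; first by rewrite (negbTE hbq) mul0r.
  by rewrite H // mul0r.
by rewrite h1 -h2 h3.
Qed.

Lemma subE (R : Type) m n p q (A : 'M[R]_(p, q)) (f : 'I_m -> 'I_p) (g : 'I_n -> 'I_q) i k :
  mxsub f g A i k = A (f i) (g k).
Proof. by rewrite mxE. Qed.
Lemma rowpE (R : Type) m n (A : 'M[R]_(m, n)) i0 a b : row' i0 A a b = A (lift i0 a) b.
Proof. by rewrite mxE. Qed.
Lemma colpE (R : Type) m n (A : 'M[R]_(m, n)) i0 a b : col' i0 A a b = A a (lift i0 b).
Proof. by rewrite mxE. Qed.

Lemma ltn_ordE m k (s : 'I_m) : m = k -> (val s < k)%N.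
Proof. by move=> e; rewrite -e; exact: ltn_ord. Qed.

Lemma PI (R : comRingType) n (x : 'I_n -> R) (y p p' : 'I_n.-1 -> R) (j : 'I_n)
  (I : {set 'I_n}) :
  (0 < val j)%N ->
  (forall k : 'I_n.-1, (val k < (val j).-1)%N -> p k = p' k) ->
  #|I| = (val j).+1 -> first_in I ->
  pminor (Bmat x y p) I - pminor (Bmat x y p') I =
  if I == [set i : 'I_n | (val i <= val j)%N]
  then (-1) ^+ (val j) * (extn p (val j).-1 - extn p' (val j).-1) else 0.
Proof.
move=> j0 agree cI /existsP[z /andP[zI /eqP z0]].
rewrite /pminor.
set A := mxsub _ _ (Bmat x y p); set A' := mxsub _ _ (Bmat x y p').
set r0 := enum_rank_in zI z.
have er0 : enum_val r0 = z by exact: enum_rankK_in.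
have ne0 : forall a, a != r0 -> val (enum_val a) != 0%N.
  move=> a har; apply/eqP => h; move/eqP: har; apply; apply: enum_val_inj.
  by rewrite er0; apply: val_inj; rewrite /= h z0.
have cofE : forall s, cofactor A' r0 s = cofactor A r0 s.
  move=> s; rewrite /cofactor; congr (_ * \det _); apply/matrixP => a b.
  by rewrite rowpE colpE !subE; apply: B1; apply: ne0; rewrite eq_sym neq_lift.
rewrite (expand_det_row A r0) (expand_det_row A' r0) -sumrB.
under eq_bigr => s _ do rewrite cofE -mulrBl.
have Ars : forall s, A r0 s - A' r0 s = if val (enum_val s) == 0%N then 0
    else extn p (val (enum_val s)).-1 - extn p' (val (enum_val s)).-1.
  move=> s; rewrite !subE er0 !B2 //.
  by case: ifP => _ //; rewrite subrr.
have T1 : forall s, (val (enum_val s) < val j)%N -> A r0 s - A' r0 s = 0.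
  move=> s hs; rewrite Ars; case: ifP => // /negbT hs0.
  apply/eqP; rewrite subr_eq0; apply/eqP; apply: (extn_agree agree).
  by rewrite -ltnS prednK ?lt0n // prednK.
case: eqP => [EI|NI].
- subst I.
  have ev : forall a, val (enum_val a) = val a := enum_val_I0 (ltn_ord j).
  have jI : j \in [set i : 'I_n | (val i <= val j)%N] by rewrite inE.
  set sj := enum_rank_in jI j.
  have esj : enum_val sj = j by exact: enum_rankK_in.
  have vr0 : val r0 = 0%N by rewrite -ev er0.
  have vsj : val sj = val j by rewrite -ev esj.
  rewrite (bigD1 sj) //= big1 ?addr0; last first.
    move=> s nes; rewrite T1 ?mul0r //; rewrite ev.
    have : (val s < (val j).+1)%N by apply: ltn_ordE.
    rewrite ltnS leq_eqVlt => /orP[/eqP h|//].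
    by move/eqP: nes; case; apply: val_inj; rewrite vsj.
  rewrite Ars esj (negbTE (lt0n_neq0 j0)) /cofactor vr0 vsj add0n.
  have -> : row' r0 (col' sj A) = 1%:M.
    apply/matrixP => a b; rewrite rowpE colpE subE [RHS]mxE.
    rewrite B3; last first.
    + rewrite ev /= /bump vsj.
      have hb : (val b < val j)%N by apply: ltn_ordE; rewrite cI.
      rewrite (_ : (val j <= b)%N = false) ?add0n; last by apply/negbTE; rewrite -ltnNge. apply: (leq_trans hb); rewrite -ltnS prednK; [exact: ltn_ord | exact: (leq_ltn_trans (leq0n _) (ltn_ord j))].
    + by apply: ne0; rewrite eq_sym neq_lift.
    rewrite !ev /= /bump vr0 vsj.
    have hb : (val b < val j)%N by apply: ltn_ordE; rewrite cI.
    rewrite (_ : (val j <= b)%N = false); last by apply/negbTE; rewrite -ltnNge.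
    by rewrite add0n add1n eqSS.
  by rewrite det1 mulr1 mulrC.
- rewrite big1 // => s _.
  case: (ltnP (val (enum_val s)) (val j)) => hs; first by rewrite T1 ?mul0r.
  case: (boolP [exists q : 'I_n, (q \in I) && (val q < val (enum_val s))%N &&
      [exists q' : 'I_n, (val q' == (val q).+1) && (q' \notin I)]]).
  + move/existsP => [q /andP[/andP[qI qc] /existsP[q' /andP[/eqP eq' q'I]]]].
    rewrite (@cof_zero _ _ A r0 s (enum_rank_in qI q)) ?mulr0 //.
      apply/eqP => h; move: qc; rewrite -h enum_rankK_in //; by rewrite ltnn.
    move=> a har; rewrite subE enum_rankK_in // B3 ?ne0 //; last first.
      apply: (leq_trans qc); rewrite -ltnS prednK; [exact: ltn_ord | exact: (leq_ltn_trans (leq0n _) (ltn_ord q))].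
    case: eqP => // h; move: q'I; rewrite (_ : q' = enum_val a) ?enum_valP //.
    by apply: val_inj; rewrite h eq'.
  + move/existsPn => Hn; exfalso; apply: NI.
    have H := @chain n I (val (enum_val s)).
    have all : forall i : 'I_n, (val i <= val (enum_val s))%N -> i \in I.
      apply: H; last by exists z.
      move=> q qI qc q' eq'; apply/negPn; apply/negP => q'I.
      move: (Hn q); rewrite qI qc /=; move/existsPn => /(_ q').
      by rewrite eq' eqxx q'I.
    have sub : [set i : 'I_n | (val i <= val j)%N] \subset I.
      by apply/subsetP => i; rewrite inE => hi; apply: all; apply: leq_trans hs.
    move: (subset_cardP (etrans (card_I0 (ltn_ord j)) (esym cI)) sub) => eqI.
    by apply/setP => i; rewrite eqI.
Qed.


Lemma KL (R : comRingType) n (x : 'I_n -> R) (y p p' : 'I_n.-1 -> R) (j : 'I_n) :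
  (0 < val j)%N ->
  (forall k : 'I_n.-1, (val k < (val j).-1)%N -> p k = p' k) ->
  Fj x y p j - Fj x y p' j = (-1) ^+ (val j) * (extn p (val j).-1 - extn p' (val j).-1).
Proof.
move=> j0 agree; rewrite /Fj -sumrB.
rewrite (eq_bigr (fun I => if I == [set i : 'I_n | (val i <= val j)%N]
  then (-1) ^+ (val j) * (extn p (val j).-1 - extn p' (val j).-1) else 0)); last first.
  by move=> I /andP[/eqP cI f]; apply: PI.
rewrite (bigD1 [set i : 'I_n | (val i <= val j)%N]) /= ?eqxx; last first.
  rewrite card_I0 // eqxx /=; apply/existsP.
  by exists (Ordinal (leq_ltn_trans (leq0n _) (ltn_ord j))); rewrite inE /=.
by rewrite big1 ?addr0 // => I /andP[_ /negbTE ->].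
Qed.

Lemma sgn2 (R : ringType) k : (-1) ^+ k * (-1) ^+ k = 1 :> R.
Proof. by rewrite -exprD -signr_odd oddD addbb. Qed.

Lemma extn_nth (R : ringType) K (s : seq R) m :
  extn (fun k : 'I_K => nth 0 s k) m = if (m < K)%N then nth 0 s m else 0.
Proof.
rewrite /extn; case: insubP => [k km e|km] /=; first by rewrite e km.
by rewrite (negbTE km).
Qed.

Lemma extn_val (R : ringType) K (f : 'I_K -> R) (k : 'I_K) : extn f (val k) = f k.
Proof. by rewrite /extn valK. Qed.

Definition step (R : comRingType) n (x : 'I_n -> R) (y : 'I_n.-1 -> R) (s : seq R) : R :=
  oapp (fun j : 'I_n => (-1) ^+ (size s).+1 * (x j - Fj x y (fun k => nth 0 s k) j)) 0
    (insub (size s).+1).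

Fixpoint pref (R : comRingType) n (x : 'I_n -> R) (y : 'I_n.-1 -> R) (k : nat) : seq R :=
  if k is k'.+1 then rcons (pref x y k') (step x y (pref x y k')) else [::].

Lemma size_pref (R : comRingType) n (x : 'I_n -> R) y k : size (pref x y k) = k.
Proof. by elim: k => //= k IH; rewrite size_rcons IH. Qed.

Lemma nth_pref (R : comRingType) n (x : 'I_n -> R) y k m :
  (m < k)%N -> nth 0 (pref x y k) m = nth 0 (pref x y m.+1) m.
Proof.
elim: k => // k IH; rewrite ltnS leq_eqVlt => /orP[/eqP -> //|h].
by rewrite /= nth_rcons size_pref h IH.
Qed.

Lemma nth_pref_last (R : comRingType) n (x : 'I_n -> R) y m :
  nth 0 (pref x y m.+1) m = step x y (pref x y m).
Proof. by rewrite /= nth_rcons size_pref ltnn eqxx. Qed.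

Lemma nth_pref_ge (R : comRingType) n (x : 'I_n -> R) y k m :
  (k <= m)%N -> nth 0 (pref x y k) m = 0.
Proof. by move=> h; rewrite nth_default // size_pref. Qed.

Lemma pf_pref (R : comRingType) (I : Type) n (X : 'I_n -> (I -> R) -> R)
  (Y : 'I_n.-1 -> (I -> R) -> R) K m :
  (forall i, is_polyfun (X i)) -> (forall k, is_polyfun (Y k)) ->
  is_polyfun (fun v => nth 0 (pref (fun i => X i v) (fun k => Y k v) K) m).
Proof.
move=> hX hY; elim: K m => [|K IH] m.
  by apply: (pf_ext (f := fun _ => 0)); [move=> v; rewrite nth_nil | apply: pf_const].
apply: (pf_ext (f := fun v => if (m < K)%N
   then nth 0 (pref (fun i => X i v) (fun k => Y k v) K) m
   else if m == K then
     oapp (fun j : 'I_n => (-1) ^+ K.+1 * (X j v -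
        Fj (fun i => X i v) (fun k => Y k v)
          (fun k => nth 0 (pref (fun i => X i v) (fun k => Y k v) K) k) j)) 0
       (insub K.+1)
   else 0)).
  by move=> v; rewrite /= nth_rcons size_pref /step size_pref.
case: (m < K)%N; first exact: IH.
case: (m == K); last exact: pf_const.
case: (insub K.+1) => [j|] /=; last exact: pf_const.
apply: pf_mul; first exact: pf_const.
apply: (pf_ext (f := fun v => X j v + (-1) * Fj (fun i => X i v) (fun k => Y k v)
          (fun k => nth 0 (pref (fun i => X i v) (fun k => Y k v) K) k) j)).
  by move=> v; rewrite mulN1r.
apply: pf_add; first exact: hX.
apply: pf_mul; first exact: pf_const.
by apply: pf_Fj.
Qed.

Unset Implicit Arguments.
Set Strict Implicit.
Theorem lemma2p3 (C : numClosedFieldType) (n : nat) (hn : (2 <= n)%N) :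
  exists p : 'I_n.-1 -> (('I_n + 'I_n.-1) -> C) -> C,
    (forall k, is_polyfun (p k)) /\
    forall (x : 'I_n -> C) (y : 'I_n.-1 -> C),
      minor_eqs x y (fun k => p k (join_xy x y)) /\
      (forall q : 'I_n.-1 -> C, minor_eqs x y q ->
         forall k, q k = p k (join_xy x y)).
Proof.
exists (fun k v => nth 0 (pref (fun i => v (inl i)) (fun k => v (inr k)) n.-1) k).
split.
  move=> k; apply: (pf_pref (X := fun i v => v (inl i)) (Y := fun k v => v (inr k)));
    by move=> i; apply: pf_var.
move=> x y /=.
set P := fun k : 'I_n.-1 => nth 0 (pref x y n.-1) k.
have Pm : forall m, (m < n.-1)%N -> extn P m = step x y (pref x y m).
  by move=> m hm; rewrite extn_nth hm (nth_pref x y hm) nth_pref_last.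
have stepE : forall j : 'I_n, (0 < val j)%N ->
    step x y (pref x y (val j).-1) = (-1) ^+ (val j) *
      (x j - Fj x y (fun k : 'I_n.-1 => nth 0 (pref x y (val j).-1) k) j).
  move=> j j0; rewrite /step size_pref prednK // valK /=.
  by [].
have ext0 : forall m, extn (fun k : 'I_n.-1 => nth 0 (pref x y m) k) m = 0.
  by move=> m; rewrite extn_nth (nth_pref_ge x y (leqnn m)); case: ifP.
split.
  move=> j j0; change (Fj x y P j = x j).
  have jlt : ((val j).-1 < n.-1)%N.
    have n0 : (0 < n)%N := leq_ltn_trans (leq0n _) (ltn_ord j).
    by rewrite -ltnS (prednK j0) (prednK n0); exact: ltn_ord.
  have agree : forall k : 'I_n.-1, (val k < (val j).-1)%N ->
      P k = nth 0 (pref x y (val j).-1) k.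
    move=> k hk; rewrite /P (nth_pref x y (ltn_ord k)).
    by rewrite (nth_pref x y hk).
  have := KL x y j0 agree.
  rewrite Pm // ext0 subr0 stepE // mulrA sgn2 mul1r => h.
  have -> : Fj x y P j = Fj x y (fun k : 'I_n.-1 => nth 0 (pref x y (val j).-1) k) j +
     (x j - Fj x y (fun k : 'I_n.-1 => nth 0 (pref x y (val j).-1) k) j).
    by rewrite -h addrC subrK.
  by rewrite addrC subrK.
move=> q hq.
suff: forall m (k : 'I_n.-1), val k = m -> q k = P k by move=> H k; apply: H.
elim/ltn_ind => m IH k km; subst m.
have mn : ((val k).+1 < n)%N by rewrite -ltn_predRL; exact: ltn_ord.
pose j : 'I_n := Ordinal mn.
have j0 : (0 < val j)%N by [].
have agree : forall k' : 'I_n.-1, (val k' < (val j).-1)%N ->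
    q k' = nth 0 (pref x y (val j).-1) k'.
  move=> k' hk'; rewrite (IH (val k')) //.
  by rewrite /P (nth_pref x y (ltn_ord k')) (nth_pref x y hk').
have := KL x y j0 agree.
have -> : Fj x y q j = x j by apply: hq.
rewrite ext0 subr0.
change (x j - Fj x y (fun k' : 'I_n.-1 => nth 0 (pref x y (val j).-1) k') j =
  (-1) ^+ (val j) * extn q (val k) -> q k = P k).
rewrite extn_val => h.
have -> : q k = (-1) ^+ (val j) * (x j -
   Fj x y (fun k : 'I_n.-1 => nth 0 (pref x y (val j).-1) k) j).
  by rewrite h mulrA sgn2 mul1r.
rewrite -stepE // /P (nth_pref x y (ltn_ord k)).
by rewrite nth_pref_last.
Qed.
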